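(* The centre of $\Omega^1_{\mathcal{D}}(\mathcal{B})$ is $\{0\}$.
   Context: $\mathcal{B}=\mathcal{O}(S^2_q)\subset\mathcal{A}=\mathcal{O}(SU_q(2))$ is the Podle\'{s} sphere, $q\in(0,1]$, and $\Omega^1_{\mathcal{D}}(\mathcal{B})=\mathrm{span}\{a[\mathcal{D},b]\}$ are the one-forms of the Dabrowski--Sitarz spectral triple, identified with off-diagonal $2\times2$ matrices with entries in $\mathcal{A}$, so $\Omega^1_{\mathcal{D}}(\mathcal{B})\subset\mathcal{A}^{\oplus2}$. The centre of a $\mathcal{B}$-bimodule $M$ is $\{x\in M: bx=xb\ \forall b\in\mathcal{B}\}$. It is used that the commutant of $\mathcal{B}$ in $\mathcal{A}$ consists only of scalar multiples of the identity, while $\Omega^1_{\mathcal{D}}(\mathcal{B})$ does not intersect the scalars. *)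

(* Defs.v *)
From HB Require Import structures.
From mathcomp Require Import all_boot all_order all_algebra.
From mathcomp Require Import complex.
From mathcomp Require Import reals.
Set Implicit Arguments. Unset Strict Implicit. Unset Printing Implicit Defensive.
Import Order.TTheory GRing.Theory Num.Theory.
Local Open Scope ring_scope.

Section SUq2.
Variable R : realType.
Local Notation C := R[i].
Variable A : algType C.
Variable q : R.

Definition qC : C := real_complex R q.
Definition sqC : C := real_complex R (Num.sqrt q).

(* Defining relations of O(SU_q(2)) with generators a b c d
   (matrix of generators [[a, b], [c, d]]), Klimyk--Schmuedgen 4.1.2. *)
Record SUq2_relations (a b c d : A) : Prop := {
  rel_ab : a * b = qC *: (b * a);
  rel_ac : a * c = qC *: (c * a);
  rel_bd : b * d = qC *: (d * b);
  rel_cd : c * d = qC *: (d * c);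
  rel_bc : b * c = c * b;
  rel_ad : a * d - d * a = (qC - qC^-1) *: (b * c);
  rel_det : a * d - qC *: (b * c) = 1 }.

Definition pbw_mono (a b c d : A) (i : int * nat * nat) : A :=
  let: (k, m, n) := i in
  (match k with Posz k' => a ^+ k' | Negz k' => d ^+ k'.+1 end) * b ^+ m * c ^+ n.

Definition pbw_free (a b c d : A) : Prop :=
  forall (s : seq (int * nat * nat)) (coef : int * nat * nat -> C),
    uniq s -> \sum_(i <- s) coef i *: pbw_mono a b c d i = 0 ->
    forall i, i \in s -> coef i = 0.

Definition pbw_span (a b c d : A) : Prop :=
  forall x : A, exists (s : seq (int * nat * nat)) (coef : int * nat * nat -> C),
    x = \sum_(i <- s) coef i *: pbw_mono a b c d i.

Definition is_OSUq2 (a b c d : A) : Prop :=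
  [/\ SUq2_relations a b c d, pbw_free a b c d & pbw_span a b c d].

Record Uq_action (a b c d : A) (K Ki E F : {linear A -> A}) : Prop := {
  K_mul : forall x y, K (x * y) = K x * K y;
  K_one : K 1 = 1;
  Ki_mul : forall x y, Ki (x * y) = Ki x * Ki y;
  Ki_one : Ki 1 = 1;
  E_mul : forall x y, E (x * y) = E x * Ki y + K x * E y;
  F_mul : forall x y, F (x * y) = F x * Ki y + K x * F y;
  K_a : K a = sqC *: a;  K_b : K b = sqC^-1 *: b;
  K_c : K c = sqC *: c;  K_d : K d = sqC^-1 *: d;
  Ki_a : Ki a = sqC^-1 *: a;  Ki_b : Ki b = sqC *: b;
  Ki_c : Ki c = sqC^-1 *: c;  Ki_d : Ki d = sqC *: d;
  E_a : E a = b;  E_b : E b = 0;  E_c : E c = d;  E_d : E d = 0;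
  F_a : F a = 0;  F_b : F b = a;  F_c : F c = 0;  F_d : F d = c }.

Definition podles (K : {linear A -> A}) (x : A) : Prop := K x = x.

(* One-forms Omega^1_D(B) = span { x [D, y] : x, y in B }, an element being
   identified with the off-diagonal matrix [[0, w1], [w2, 0]], i.e. the pair
   (w1, w2) in A^2.  Here [D, y] = [[0, lam * E y], [mu * F y, 0]] where the
   nonzero constants lam, mu encode the normalisation of D. *)
Definition Omega1 (K E F : {linear A -> A}) (lam mu : C) (w : A * A) : Prop :=
  exists s : seq (A * A),
    (forall p, p \in s -> podles K p.1 /\ podles K p.2) /\
    w.1 = \sum_(p <- s) p.1 * (lam *: E p.2) /\
    w.2 = \sum_(p <- s) p.1 * (mu *: F p.2).

Definition central_B (K : {linear A -> A}) (w : A * A) : Prop :=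
  forall y, podles K y -> y * w.1 = w.1 * y /\ y * w.2 = w.2 * y.

End SUq2.

(* Main.v *)
Require Import Defs.
From HB Require Import structures.
From mathcomp Require Import all_boot all_order all_algebra.
From mathcomp Require Import complex.
From mathcomp Require Import reals.
Import Order.TTheory GRing.Theory Num.Theory.
Local Open Scope ring_scope.

Section Proof.
Variable R : realType.
Variable q : R.
Hypothesis hq0 : 0 < q.
Hypothesis hq1 : q < 1.
Variable A : algType R[i].
Variables a b c d : A.
Variables K Ki E F : {linear A -> A}.
Hypothesis Hrel : SUq2_relations q a b c d.
Hypothesis Hfree : pbw_free a b c d.
Hypothesis Hspan : pbw_span a b c d.
Hypothesis Hact : Uq_action q a b c d K Ki E F.

Local Notation t := (qC q).
Local Notation s := (sqC q).

Lemma t_gt0 : 0 < t.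
Proof. by rewrite /qC -(rmorph0 (real_complex R)) ltcR. Qed.
Lemma t_lt1 : t < 1.
Proof. by rewrite /qC -(rmorph1 (real_complex R)) ltcR. Qed.
Lemma t_neq0 : t != 0.
Proof. by rewrite gt_eqF // t_gt0. Qed.
Lemma s_sq : s * s = t.
Proof. by rewrite /sqC /qC -rmorphM -expr2 sqr_sqrtr // ltW. Qed.
Lemma s_neq0 : s != 0.
Proof. by apply/eqP => h; move: t_neq0; rewrite -s_sq h mul0r eqxx. Qed.

Lemma span_ind (P : A -> Prop) : P 1 -> P a -> P b -> P c -> P d ->
  (forall x y, P x -> P y -> P (x * y)) -> (forall x y, P x -> P y -> P (x + y)) ->
  (forall k x, P x -> P (k *: x)) -> forall x, P x.
Proof.
move=> P1 Pa Pb Pc Pd PM PD PZ x.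
have PX : forall y n, P y -> P (y ^+ n).
  by move=> y n Py; elim: n => [|n IH]; rewrite ?expr0 // exprS; apply: PM.
case: (Hspan x) => sq [coef ->]; elim: sq => [|i sq IH].
  by rewrite big_nil -(scale0r 1); apply: PZ.
rewrite big_cons; apply: PD => //; apply: PZ.
by case: i => [[[k|k] m] n] /=; apply: (PM _ _ (PM _ _ (PX _ _ _) (PX _ _ _)) (PX _ _ _)).
Qed.

Lemma K_Ki y : K (Ki y) = y.
Proof.
elim/span_ind: y.
- by rewrite (Ki_one Hact) (K_one Hact).
- by rewrite (Ki_a Hact) linearZ /= (K_a Hact) scalerA mulVf ?scale1r // s_neq0.
- by rewrite (Ki_b Hact) linearZ /= (K_b Hact) scalerA mulfV ?scale1r // s_neq0.
- by rewrite (Ki_c Hact) linearZ /= (K_c Hact) scalerA mulVf ?scale1r // s_neq0.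
- by rewrite (Ki_d Hact) linearZ /= (K_d Hact) scalerA mulfV ?scale1r // s_neq0.
- by move=> x y hx hy; rewrite (Ki_mul Hact) (K_mul Hact) hx hy.
- by move=> x y hx hy; rewrite !linearD /= hx hy.
- by move=> k x hx; rewrite !linearZ /= hx.
Qed.

Lemma Ki_K y : Ki (K y) = y.
Proof.
elim/span_ind: y.
- by rewrite (K_one Hact) (Ki_one Hact).
- by rewrite (K_a Hact) linearZ /= (Ki_a Hact) scalerA mulfV ?scale1r // s_neq0.
- by rewrite (K_b Hact) linearZ /= (Ki_b Hact) scalerA mulVf ?scale1r // s_neq0.
- by rewrite (K_c Hact) linearZ /= (Ki_c Hact) scalerA mulfV ?scale1r // s_neq0.
- by rewrite (K_d Hact) linearZ /= (Ki_d Hact) scalerA mulVf ?scale1r // s_neq0.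
- by move=> x y hx hy; rewrite (K_mul Hact) (Ki_mul Hact) hx hy.
- by move=> x y hx hy; rewrite !linearD /= hx hy.
- by move=> k x hx; rewrite !linearZ /= hx.
Qed.

Lemma twisted (G : {linear A -> A}) (u : R[i]) :
  (forall x y, G (x * y) = G x * Ki y + K x * G y) ->
  K (G a) = u *: G (K a) -> K (G b) = u *: G (K b) ->
  K (G c) = u *: G (K c) -> K (G d) = u *: G (K d) ->
  forall x, K (G x) = u *: G (K x).
Proof.
move=> Gmul Ga Gb Gc Gd; elim/span_ind; [|exact: Ga|exact: Gb|exact: Gc|exact: Gd| | |].
- have G1 : G 1 = 0.
    have h := Gmul 1 1; rewrite mulr1 (Ki_one Hact) (K_one Hact) mulr1 mul1r in h.
    by apply: (@addrI _ (G 1)); rewrite addr0 -h.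
  by rewrite (K_one Hact) G1 linear0 scaler0.
- move=> x y hx hy; rewrite Gmul linearD /= !(K_mul Hact) hx hy K_Ki Gmul Ki_K.
  by rewrite scalerDr -scalerAl -scalerAr.
- by move=> x y hx hy; rewrite !linearD /= hx hy ?scalerDr.
- by move=> k x hx; rewrite !linearZ /= hx !scalerA mulrC.
Qed.

Lemma KE x : K (E x) = t^-1 *: E (K x).
Proof.
have key : t^-1 * s = s^-1 by rewrite -s_sq invfM -mulrA mulVf ?mulr1 // s_neq0.
apply: twisted => //.
- exact: (E_mul Hact).
- by rewrite (E_a Hact) (K_b Hact) (K_a Hact) linearZ /= (E_a Hact) scalerA key.
- by rewrite (E_b Hact) (K_b Hact) linearZ /= (E_b Hact) linear0 !scaler0.
- by rewrite (E_c Hact) (K_d Hact) (K_c Hact) linearZ /= (E_c Hact) scalerA key.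
- by rewrite (E_d Hact) (K_d Hact) linearZ /= (E_d Hact) linear0 !scaler0.
Qed.

Lemma KF x : K (F x) = t *: F (K x).
Proof.
have key : t * s^-1 = s by rewrite -s_sq (mulfK s_neq0).
apply: twisted => //.
- exact: (F_mul Hact).
- by rewrite (F_a Hact) (K_a Hact) linearZ /= (F_a Hact) linear0 !scaler0.
- by rewrite (F_b Hact) (K_a Hact) (K_b Hact) linearZ /= (F_b Hact) scalerA key.
- by rewrite (F_c Hact) (K_c Hact) linearZ /= (F_c Hact) linear0 !scaler0.
- by rewrite (F_d Hact) (K_c Hact) (K_d Hact) linearZ /= (F_d Hact) scalerA key.
Qed.


Local Notation M := (pbw_mono a b c d).

Lemma comm_powl (x y : A) (u : R[i]) n :
  y * x = u *: (x * y) -> y ^+ n * x = u ^+ n *: (x * y ^+ n).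
Proof.
move=> h; elim: n => [|n IH]; first by rewrite !expr0 mul1r mulr1 scale1r.
by rewrite {1}exprS -mulrA IH -scalerAr mulrA h -scalerAl scalerA -exprSr -mulrA -exprS.
Qed.

Lemma comm_powr (x y : A) (u : R[i]) n :
  y * x = u *: (x * y) -> y * x ^+ n = u ^+ n *: (x ^+ n * y).
Proof.
move=> h; elim: n => [|n IH]; first by rewrite !expr0 mul1r mulr1 scale1r.
by rewrite {1}exprSr mulrA IH -scalerAl -mulrA h -scalerAr scalerA -exprSr mulrA -exprSr.
Qed.

Lemma rba : b * a = t^-1 *: (a * b).
Proof. by rewrite (rel_ab Hrel) scalerA mulVf ?scale1r // t_neq0. Qed.
Lemma rca : c * a = t^-1 *: (a * c).
Proof. by rewrite (rel_ac Hrel) scalerA mulVf ?scale1r // t_neq0. Qed.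
Lemma rcb : c * b = 1 *: (b * c).
Proof. by rewrite scale1r (rel_bc Hrel). Qed.

Lemma step1_gen (X : A) (v : R[i]) m n :
  b * X = v *: (X * b) -> c * X = v *: (X * c) ->
  (b * c) * (X * b ^+ m * c ^+ n) = (v * v) *: (X * b ^+ m.+1 * c ^+ n.+1) /\
  (X * b ^+ m * c ^+ n) * (b * c) = X * b ^+ m.+1 * c ^+ n.+1.
Proof.
move=> hb hc.
have cY : c * b ^+ m = b ^+ m * c by rewrite (comm_powr _ _ _ m rcb) expr1n scale1r.
have Zb : c ^+ n * b = b * c ^+ n by rewrite (comm_powl _ _ _ n rcb) expr1n scale1r.
split.
  rewrite -!mulrA (mulrA c) hc -scalerAl -scalerAr !mulrA hb -!scalerAl scalerA.
  rewrite -(mulrA _ c) cY mulrA -(mulrA X b) -exprS -(mulrA _ c (c ^+ n)) -exprS.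
  by [].
rewrite !mulrA -(mulrA _ (c ^+ n) b) Zb mulrA -(mulrA X (b ^+ m) b) -exprSr.
by rewrite -(mulrA _ (c ^+ n) c) -exprSr.
Qed.


Lemma step2_gen m n :
  (a * b) * (b ^+ m * c ^+ n) = a * b ^+ m.+1 * c ^+ n /\
  (b ^+ m * c ^+ n) * (a * b) = t^-1 ^+ (m + n) *: (a * b ^+ m.+1 * c ^+ n).
Proof.
have Zb : c ^+ n * b = b * c ^+ n by rewrite (comm_powl _ _ _ n rcb) expr1n scale1r.
split; first by rewrite !mulrA -(mulrA a b) -exprS.
rewrite !mulrA -(mulrA _ (c ^+ n) a) (comm_powl _ _ _ n rca) -scalerAr -scalerAl.
rewrite mulrA (comm_powl _ _ _ m rba) -!scalerAl scalerA -exprD addnC.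
by rewrite -(mulrA _ (c ^+ n) b) Zb mulrA -(mulrA a (b ^+ m) b) -exprSr.
Qed.

Lemma iterop_add (v : A) n : iterop n +%R v 0 = v *+ n.
Proof.
case: n => [|n]; first by []. rewrite iteropS. elim: n => [|n IH]; first by rewrite mulr1n.
by rewrite iterS IH [RHS]mulrS.
Qed.

Lemma uspan x : exists sq (coef : int * nat * nat -> R[i]),
  uniq sq /\ x = \sum_(i <- sq) coef i *: M i.
Proof.
case: (Hspan x) => sq [coef ->].
exists (undup sq), (fun i => coef i *+ count_mem i sq); split; first exact: undup_uniq.
rewrite -big_undup_iterop_count; apply: eq_bigr => i _.
by rewrite iterop_add scalerMnl.
Qed.


Definition mu (i : int * nat * nat) : R[i] :=
  match i.1.1 with Posz k => t^-1 ^+ (k + k) | Negz j => t ^+ (j.+1 + j.+1) end.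
Definition sh (i : int * nat * nat) : int * nat * nat := (i.1.1, i.1.2.+1, i.2.+1).
Definition ush (i : int * nat * nat) : int * nat * nat := (i.1.1, i.1.2.-1, i.2.-1).
Definition rho (i : int * nat * nat) : R[i] := t^-1 ^+ (i.1.2 + i.2).
Definition sh2 (i : int * nat * nat) : int * nat * nat := (i.1.1 + 1, i.1.2.+1, i.2).
Definition ush2 (i : int * nat * nat) : int * nat * nat := (i.1.1 - 1, i.1.2.-1, i.2).

Lemma shK : cancel sh ush. Proof. by case=> [[k m] n]. Qed.
Lemma sh2K : cancel sh2 ush2. Proof. by case=> [[k m] n]; rewrite /sh2 /ush2 /= addrK. Qed.

Lemma L1 i : (b * c) * M i = mu i *: M (sh i) /\ M i * (b * c) = M (sh i).
Proof.
case: i => [[[k|j] m] n]; rewrite /mu /sh /=; rewrite exprD; apply: step1_gen.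
- exact: comm_powr rba.
- exact: comm_powr rca.
- exact: comm_powr (rel_bd Hrel).
- exact: comm_powr (rel_cd Hrel).
Qed.

Lemma L2 i : i.1.1 = 0 ->
  (a * b) * M i = M (sh2 i) /\ M i * (a * b) = rho i *: M (sh2 i).
Proof.
case: i => [[k m] n] /= ->; rewrite /sh2 /rho /= expr0 !mul1r expr1; exact: step2_gen.
Qed.

Lemma t_inv_gt1 : 1 < t^-1.
Proof. by rewrite invf_gt1 ?t_gt0 ?t_lt1. Qed.

Lemma mu_neq1 i : i.1.1 != 0 -> mu i != 1.
Proof.
case: i => [[[k|j] m] n]; rewrite /mu /= => hk.
  by rewrite gt_eqF // exprn_egt1 ?t_inv_gt1 // addn_eq0 andbb.
by rewrite lt_eqF // exprn_ilt1 ?ltW ?t_gt0 ?t_lt1.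
Qed.

Lemma rho_neq1 i : (i.1.2 + i.2)%N != 0%N -> rho i != 1.
Proof. by move=> h; rewrite /rho gt_eqF // exprn_egt1 ?t_inv_gt1. Qed.


Definition i0 : int * nat * nat := ((0 : int), 0%N, 0%N).

Lemma commutant x : (b * c) * x = x * (b * c) -> (a * b) * x = x * (a * b) ->
  exists k, x = k *: 1.
Proof.
move=> h1 h2; case: (uspan x) => sq [coef [usq hx]].
have S1 : forall i, i \in sq -> i.1.1 != 0 -> coef i = 0.
  have E1 : \sum_(j <- map sh sq) (coef (ush j) * (mu (ush j) - 1)) *: M j = 0.
    rewrite big_map.
    transitivity ((b * c) * x - x * (b * c)); last by rewrite h1 subrr.
    rewrite hx mulr_sumr mulr_suml -sumrB; apply: eq_bigr => i _.
    have [l r] := L1 i.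
    by rewrite shK -scalerAr -scalerAl l r scalerA mulrBr mulr1 scalerBl.
  move=> i hi hk.
  have u1 : uniq (map sh sq) by rewrite (map_inj_uniq (can_inj shK)).
  have := Hfree _ _ u1 E1 _ (map_f sh hi).
  by rewrite shK => /eqP; rewrite mulf_eq0 subr_eq0 (negbTE (mu_neq1 i hk)) orbF => /eqP.
have S2 : forall i, i \in sq -> i != i0 -> coef i = 0.
  have E2 : \sum_(j <- map sh2 sq) (coef (ush2 j) * (1 - rho (ush2 j))) *: M j = 0.
    rewrite big_map.
    transitivity ((a * b) * x - x * (a * b)); last by rewrite h2 subrr.
    rewrite hx mulr_sumr mulr_suml -sumrB big_seq [RHS]big_seq; apply: eq_bigr => i hi.
    rewrite sh2K -scalerAr -scalerAl.
    case: (eqVneq i.1.1 0) => hk.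
      by have [l r] := L2 i hk; rewrite l r scalerA mulrBr mulr1 scalerBl.
    by rewrite (S1 i hi hk) mul0r !scale0r subrr.
  move=> i hi hne.
  case: (eqVneq i.1.1 0) => hk; last exact: S1.
  have hmn : (i.1.2 + i.2)%N != 0%N.
    move: hne hk; case: i {hi} => [[k m] n] /= hne hk; apply: (contra _ hne).
    by rewrite addn_eq0 => /andP[/eqP-> /eqP->]; rewrite hk.
  have u2 : uniq (map sh2 sq) by rewrite (map_inj_uniq (can_inj sh2K)).
  have := Hfree _ _ u2 E2 _ (map_f sh2 hi).
  by rewrite sh2K => /eqP; rewrite mulf_eq0 subr_eq0 [1 == _]eq_sym (negbTE (rho_neq1 i hmn)) orbF => /eqP.
exists (\sum_(i <- sq) (if i == i0 then coef i else 0)).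
rewrite hx scaler_suml big_seq [RHS]big_seq; apply: eq_bigr => i hi.
case: eqP => [-> | /eqP hne]; first by rewrite /= expr0 !mulr1.
by rewrite (S2 i hi hne) !scale0r.
Qed.


Lemma weight_zero x (u : R[i]) : u != 1 -> K x = u *: x ->
  (b * c) * x = x * (b * c) -> (a * b) * x = x * (a * b) -> x = 0.
Proof.
move=> hu hKu h1 h2; case: (commutant _ h1 h2) => k hx.
have hK : K x = x by rewrite hx linearZ /= (K_one Hact).
have : (1 - u) *: x = 0 by rewrite scalerBl scale1r -hKu hK subrr.
by move/eqP; rewrite scaler_eq0 subr_eq0 eq_sym (negbTE hu) /= => /eqP.
Qed.

Lemma pod_bc : K (b * c) = b * c.
Proof.
by rewrite (K_mul Hact) (K_b Hact) (K_c Hact) -scalerAl -scalerAr scalerA mulVf ?scale1r // s_neq0.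
Qed.

Lemma pod_ab : K (a * b) = a * b.
Proof.
by rewrite (K_mul Hact) (K_a Hact) (K_b Hact) -scalerAl -scalerAr scalerA mulfV ?scale1r // s_neq0.
Qed.

Lemma Om_weight (lam mu0 : R[i]) w : Omega1 K E F lam mu0 w ->
  K w.1 = t^-1 *: w.1 /\ K w.2 = t *: w.2.
Proof.
case=> sq [hp [h1 h2]]; rewrite h1 h2 !linear_sum ?scaler_sumr.
split; apply: eq_big_seq => p hpin; have [p1 p2] := hp p hpin.
  by rewrite (K_mul Hact) p1 linearZ /= KE p2 scalerAr !scalerA mulrC.
by rewrite (K_mul Hact) p1 linearZ /= KF p2 scalerAr !scalerA mulrC.
Qed.

Lemma main_sec (lam mu0 : R[i]) w :
  Omega1 K E F lam mu0 w -> central_B K w -> w = (0, 0).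
Proof.
move=> Hw Hc; have [w1 w2] := Om_weight _ _ _ Hw.
have [c1 c2] := Hc _ pod_bc; have [a1 a2] := Hc _ pod_ab.
rewrite [w]surjective_pairing; congr (_, _).
  by apply: (weight_zero _ _ _ w1 c1 a1); rewrite gt_eqF // t_inv_gt1.
by apply: (weight_zero _ _ _ w2 c2 a2); rewrite lt_eqF // t_lt1.
Qed.

End Proof.

Theorem mainTheorem16 (R : realType) (q : R) (hq0 : 0 < q) (hq1 : q < 1)
  (A : algType R[i]) (a b c d : A) (K Ki E F : {linear A -> A})
  (lam mu : R[i]) (hlam : lam != 0) (hmu : mu != 0) :
  is_OSUq2 q a b c d ->
  Uq_action q a b c d K Ki E F ->
  forall w : A * A,
    Omega1 K E F lam mu w -> central_B K w -> w = (0, 0).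
Proof.
move=> [Hrel Hfree Hspan] Hact w Hw Hc.
exact: (@main_sec R q hq0 hq1 A a b c d K Ki E F Hrel Hfree Hspan Hact lam mu w Hw Hc).
Qed.
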